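(* For $n\ge2$, the sets $\widetilde{\mathbb G}_n$ and $\widetilde\Gamma_n$ are both starlike about $(0,\dots,0)$ but neither is circular. Consequently $\widetilde{\mathbb G}_n$ is simply connected.
   Context: $\mathbb D$ is the open unit disc. $\widetilde{\mathbb G}_n=\{(y_1,\dots,y_{n-1},q)\in\mathbb C^n: q\in\mathbb D,\ y_j=\beta_j+\bar\beta_{n-j}q$ for some $\beta_j\in\mathbb C$ with $|\beta_j|+|\beta_{n-j}|<\binom{n}{j}$, $j=1,\dots,n-1\}$; $\widetilde\Gamma_n$ is its closure. A set $S$ is starlike about $z_0\in S$ if for every $z\in S$ the segment from $z_0$ to $z$ lies in $S$. A set $S\subset\mathbb C^n$ is circular if $z\in S$ implies $e^{i\theta}z\in S$ for all $\theta\in[0,2\pi)$. *)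

(* Defs.v *)
From HB Require Import structures.
From mathcomp Require Import all_boot all_order all_algebra.
From mathcomp Require Import all_classical all_reals all_analysis.
From mathcomp Require Import complex.
Set Implicit Arguments. Unset Strict Implicit. Unset Printing Implicit Defensive.
Import Order.TTheory GRing.Theory Num.Theory.
Import numFieldNormedType.Exports.
Local Open Scope classical_set_scope.
Local Open Scope ring_scope.

Section Defs.
Variable R : realType.
Local Notation C := ((R[i])^o).
Definition conjC (x : C) : C := @Num.conj (R[i]) x.

(* the k-th coordinate (0-based) of z in C^n, or 0 if k >= n *)
Definition vcoord (n : nat) (z : 'rV[C]_n) (k : nat) : C :=
  if insub k is Some i then z ord0 i else 0.

(* The point (y_1,...,y_{n-1},q) in C^n is the row vector z with
   y_j = vcoord z (j-1) and q = vcoord z (n-1). *)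
Definition Gtilde (n : nat) : set 'rV[C]_n :=
  [set z | `|vcoord z n.-1| < 1 /\
     exists beta : nat -> C,
       forall j : nat, (1 <= j <= n.-1)%N ->
         `|beta j| + `|beta (n - j)%N| < ('C(n, j))%:R /\
         vcoord z j.-1 = beta j + conjC (beta (n - j)%N) * vcoord z n.-1].

Definition Gammatilde (n : nat) : set 'rV[C]_n := closure (@Gtilde n).

Definition starlike (n : nat) (S : set 'rV[C]_n) (z0 : 'rV[C]_n) : Prop :=
  S z0 /\ forall z, S z -> forall t : R, 0 <= t <= 1 ->
    S (((1 - t)%:C)%C *: z0 + ((t%:C)%C) *: z).

Definition expi (theta : R) : C := (cos theta +i* sin theta)%C.

Definition circular (n : nat) (S : set 'rV[C]_n) : Prop :=
  forall z, S z -> forall theta : R, S (expi theta *: z).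

Definition simply_connected (n : nat) (S : set 'rV[C]_n) : Prop :=
  S !=set0 /\
  (forall x y, S x -> S y -> exists f : R -> 'rV[C]_n,
     {within `[0, 1], continuous f} /\ f 0 = x /\ f 1 = y /\
     (forall s, s \in `[0, 1] -> S (f s))) /\
  (forall g : R -> 'rV[C]_n,
     {within `[0, 1], continuous g} -> g 0 = g 1 ->
     (forall s, s \in `[0, 1] -> S (g s)) ->
     exists H : R * R -> 'rV[C]_n,
       {within `[0, 1] `*` `[0, 1], continuous H} /\
       (forall s, s \in `[0, 1] -> H (s, 0) = g s /\ H (s, 1) = g 0) /\
       (forall t, t \in `[0, 1] -> H (0, t) = g 0 /\ H (1, t) = g 0) /\
       (forall p, p \in `[0, 1] `*` `[0, 1] -> S (H p))).
End Defs.
Arguments Gtilde R n : clear implicits.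
Arguments Gammatilde R n : clear implicits.

(* Main.v *)
Require Import Defs.
From HB Require Import structures.
From mathcomp Require Import all_boot all_order all_algebra.
From mathcomp Require Import all_classical all_reals all_analysis.
From mathcomp Require Import complex.
From mathcomp Require Import ring lra zify.
Import Order.TTheory GRing.Theory Num.Theory.
Import numFieldNormedType.Exports.
Local Open Scope classical_set_scope.
Local Open Scope ring_scope.
Section S.
Variable R : realType.
Local Notation C := ((R[i])^o).

Lemma normC_real (r : R) : `|(r%:C)%C : C| = (`|r|%:C)%C.
Proof. by rewrite normc_def /= expr0n addr0 sqrtr_sqr. Qed.

Lemma RC_sub (a b : R) : ((a%:C)%C - (b%:C)%C : R[i]) = ((a - b)%:C)%C.
Proof. by apply/eqP; rewrite eq_complex /= subrr !eqxx. Qed.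

Lemma realC_ex (e : C) : e \is Num.real -> exists r : R, e = (r%:C)%C.
Proof. by move/complex_realP. Qed.

Lemma cont_RC : continuous (fun x : R => (x%:C)%C : C).
Proof.
move=> x; apply/cvgrPdist_lt => e e0.
have [r er] := realC_ex _ (gtr0_real e0); subst e; rewrite ltcR in e0.
have : (fun t : R => t) @ x --> x by exact: cvg_id.
move/cvgrPdist_lt/(_ r e0).
apply: filterS => t; rewrite RC_sub normC_real ltcR //.
Qed.

Lemma Re_sub (x y : R[i]) : complex.Re (x - y) = complex.Re x - complex.Re y.
Proof. by case: x => a b; case: y => c d. Qed.

Lemma cont_Re : continuous (fun x : C => complex.Re (x : R[i])).
Proof.
move=> x; apply/(@cvgrPdist_lt _ _ _ (nbhs x) (nbhs_filter x)) => e e0.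
have : (fun t : C => t) @ x --> x by exact: cvg_id.
move/cvgrPdist_lt/(_ (e%:C)%C); rewrite ltcR => /(_ e0); apply: filterS => t.
move=> h; rewrite -Re_sub; rewrite -ltcR; apply: le_lt_trans h.
exact: normc_ge_Re.
Qed.

Lemma cont_conj : continuous (fun x : C => conjC x).
Proof.
move=> x; apply/(@cvgrPdist_lt _ _ _ (nbhs x) (nbhs_filter x)) => e e0.
have : (fun t : C => t) @ x --> x by exact: cvg_id.
move/cvgrPdist_lt/(_ e e0).
apply: filterS => t; by rewrite /conjC -rmorphB norm_conjC.
Qed.

Lemma cont_vcoord n k : continuous (fun z : 'rV[C]_n => vcoord z k).
Proof.
rewrite /vcoord; case: (insub k) => [i|]; last exact: cst_continuous.
exact: coord_continuous.
Qed.


Lemma conj_real (x : R) : conjC ((x%:C)%C : C) = (x%:C)%C.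
Proof. by rewrite /conjC conj_Creal //; apply/complex_realP; exists x. Qed.

Lemma cjD (x y : C) : conjC (x + y) = conjC x + conjC y.
Proof. exact: rmorphD. Qed.
Lemma cjM (x y : C) : conjC (x * y) = conjC x * conjC y.
Proof. exact: rmorphM. Qed.

Definition cA (t r : R) := t * (1 - t * r^+2) / (1 - t^+2 * r^+2).
Definition cB (t r : R) := t * (1 - t) / (1 - t^+2 * r^+2).
Definition bp (t r : R) (q u v : C) : C :=
  (cA t r)%:C%C * u + (cB t r)%:C%C * conjC v * q.

Section coefs.
Variables (t r : R).
Hypotheses (ht0 : 0 <= t) (ht1 : t <= 1) (hr0 : 0 <= r) (hr1 : r < 1).
Lemma D_gt0 : 0 < 1 - t^+2 * r^+2.
Proof.
have h1 : t * r <= r by rewrite ler_piMl.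
have h2 : 0 <= t * r by rewrite mulr_ge0.
by rewrite -exprMn subr_gt0 exprn_ilt1 // (le_lt_trans h1 hr1).
Qed.
Lemma cA_ge0 : 0 <= cA t r.
Proof.
have r21 : r^+2 <= 1 by rewrite exprn_ile1 // ltW.
rewrite /cA; apply: divr_ge0; last exact: ltW D_gt0.
by apply: mulr_ge0 => //; rewrite subr_ge0 mulr_ile1 // exprn_ge0. Qed.
Lemma cB_ge0 : 0 <= cB t r.
Proof.
rewrite /cB; apply: divr_ge0; last exact: ltW D_gt0.
by apply: mulr_ge0 => //; rewrite subr_ge0. Qed.
Lemma cAB_le1 : cA t r + cB t r * r <= 1.
Proof.
have D0 := D_gt0.
have -> : cA t r + cB t r * r = (t * (1 - t * r^+2) + t * (1 - t) * r) / (1 - t^+2 * r^+2).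
  have Dn : 1 - t^+2 * r^+2 != 0 by rewrite gt_eqF.
  by rewrite /cA /cB; field; rewrite exprMn.
rewrite ler_pdivrMr // mul1r -subr_ge0.
have -> : 1 - t ^+ 2 * r ^+ 2 - (t * (1 - t * r ^+ 2) + t * (1 - t) * r) = (1 - t) * (1 - t * r) by ring.
apply: mulr_ge0; rewrite subr_ge0 //.
by rewrite mulr_ile1 // ltW.
Qed.
Lemma cAB_id1 : cA t r + cB t r * t * r^+2 = t.
Proof. have D0 := D_gt0. have Dn : 1 - t^+2 * r^+2 != 0 by rewrite gt_eqF.
by rewrite /cA /cB; field; rewrite exprMn. Qed.
Lemma cAB_id2 : cB t r + cA t r * t = t.
Proof. have D0 := D_gt0. have Dn : 1 - t^+2 * r^+2 != 0 by rewrite gt_eqF.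
by rewrite /cA /cB; field; rewrite exprMn. Qed.
End coefs.

Lemma ident (A B T u vb q qq : C) : A + B*T*(qq*q) = T -> B + A*T = T ->
  (A*u + B*vb*q) + (A*vb + B*u*qq)*(T*q) = T*(u + vb*q).
Proof.
move=> e1 e2.
have -> : (A*u + B*vb*q) + (A*vb + B*u*qq)*(T*q) =
   u*(A + B*T*(qq*q)) + vb*q*(B + A*T) by ring.
by rewrite e1 e2; ring.
Qed.

Lemma bp_eq (t r : R) (q u v : C) : 0 <= t <= 1 -> `|q| = (r%:C)%C -> r < 1 ->
  bp t r q u v + conjC (bp t r q v u) * ((t%:C)%C * q) = (t%:C)%C * (u + conjC v * q).
Proof.
move=> /andP[t0 t1] hq r1.
have r0 : 0 <= r by rewrite -ler0c -hq.
have e1 : (cA t r)%:C%C + (cB t r)%:C%C * (t%:C)%C * (conjC q * q) = (t%:C)%C :> C.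
  rewrite /conjC -normCKC hq -rmorphXn -!rmorphM -rmorphD.
  by rewrite cAB_id1.
have e2 : (cB t r)%:C%C + (cA t r)%:C%C * (t%:C)%C = (t%:C)%C :> C.
  by rewrite -!rmorphM -rmorphD cAB_id2.
rewrite /bp.
have ca := conj_real (cA t r); have cb := conj_real (cB t r).
move: e1 e2 ca cb; move: (cA t r)%:C%C (cB t r)%:C%C => A B e1 e2 ca cb.
rewrite !cjD !cjM ca cb {3}/conjC conjCK.
exact: ident.
Qed.

Lemma bp_le (t r : R) (q u v : C) : 0 <= t <= 1 -> `|q| = (r%:C)%C -> r < 1 ->
  `|bp t r q u v| + `|bp t r q v u| <= `|u| + `|v|.
Proof.
move=> /andP[t0 t1] hq r1.
have r0 : 0 <= r by rewrite -ler0c -hq.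
have [U hU] := realC_ex _ (normr_real u).
have [V hV] := realC_ex _ (normr_real v).
have U0 : 0 <= U by rewrite -ler0c -hU.
have V0 : 0 <= V by rewrite -ler0c -hV.
apply: le_trans (lerD (ler_normD _ _) (ler_normD _ _)) _.
have a0 := cA_ge0 t r t0 t1 r0 r1; have b0 := cB_ge0 t r t0 t1 r0 r1.
have ab := cAB_le1 t r t0 t1 r0 r1.
rewrite !normrM /conjC !norm_conjC hq hU hV !normC_real !ger0_norm //.
rewrite -!rmorphM -!rmorphD lecR.
move: (cA t r) (cB t r) a0 b0 ab => a b a0 b0 ab.
nra.
Qed.


Lemma vcoordZ n (c : C) (z : 'rV[C]_n) k : vcoord (c *: z) k = c * vcoord z k.
Proof. by rewrite /vcoord; case: (insub k) => [i|]; rewrite ?mxE ?mulr0. Qed.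

Lemma vcoord0 n k : vcoord (0 : 'rV[C]_n) k = 0.
Proof. by rewrite /vcoord; case: (insub k) => [i|]; rewrite ?mxE. Qed.

Lemma norm_realize (q : C) : `|q| = ((complex.Re `|q|)%:C)%C.
Proof. by rewrite RRe_real // normr_real. Qed.

Lemma ltC1 (r : R) : ((r%:C)%C : C) < 1 -> r < 1.
Proof. by rewrite ltcE => /andP[_]. Qed.

Lemma G_scale n (z : 'rV[C]_n) (t : R) : Gtilde R n z -> 0 <= t <= 1 ->
  Gtilde R n ((t%:C)%C *: z).
Proof.
case=> hq [beta hb] /andP[t0 t1].
set q := vcoord z n.-1 in hq hb.
set r := complex.Re `|q|.
have hr : `|q| = (r%:C)%C by exact: norm_realize.
have r1 : r < 1 by apply: ltC1; rewrite -hr.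
have r0 : 0 <= r by rewrite -ler0c -hr.
have t01 : 0 <= t <= 1 by rewrite t0 t1.
split.
  rewrite vcoordZ -/q normrM hr normC_real ger0_norm // -rmorphM.
  have : t * r < 1 by apply: le_lt_trans r1; rewrite ler_piMl.
  by rewrite -ltcR rmorph1.
exists (fun j => bp t r q (beta j) (beta (n - j)%N)).
move=> j hj; have [h1 h2] := hb j hj.
have jn : (j <= n)%N by case/andP: hj => _ /leq_trans; apply; exact: leq_pred.
rewrite subKn //; split.
  by apply: le_lt_trans h1; exact: bp_le.
rewrite !vcoordZ h2 -/q; symmetry; exact: bp_eq.
Qed.

Lemma G0 n : Gtilde R n 0.
Proof.
split; first by rewrite vcoord0 normr0 ltr01.
exists (fun=> 0) => j hj; rewrite !vcoord0 normr0 addr0 mulr0 addr0; split => //.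
rewrite ltr0n bin_gt0; case/andP: hj => _ /leq_trans; apply; exact: leq_pred.
Qed.

Lemma G_star n : starlike (Gtilde R n) 0.
Proof.
split; first exact: G0.
by move=> z hz t ht; rewrite scaler0 add0r; exact: G_scale.
Qed.


Lemma closure_image (T U : topologicalType) (f : T -> U) (A : set T) (B : set U) :
  continuous f -> (forall x, A x -> B (f x)) ->
  forall x, closure A x -> closure B (f x).
Proof.
move=> cf AB x.
have cl : closed (f @^-1` closure B).
  by apply: preimage_closed; [move=> y _; exact: cf | exact: closed_closure].
have sub : A `<=` f @^-1` closure B.
  by move=> y /AB; exact: subset_closure.
by move=> /(closureS sub); rewrite -((closure_id _).1 cl).
Qed.

Lemma scale_cont n (c : C) : continuous (fun z : 'rV[C]_n => c *: z).
Proof.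
move=> x; apply: (@cvgZ _ _ _ (nbhs x) (nbhs_filter x) (fun=> c) id);
  [exact: cvg_cst | exact: cvg_id].
Qed.

Lemma Gam_star n : starlike (Gammatilde R n) 0.
Proof.
split; first by apply: subset_closure; exact: G0.
move=> z hz t ht; rewrite scaler0 add0r.
have h := @closure_image _ _ _ (Gtilde R n) (Gtilde R n) (scale_cont n (t%:C)%C).
by apply: (h _ z hz) => y hy; exact: G_scale.
Qed.


Lemma vcoord_row n (F : nat -> C) k : (k < n)%N ->
  vcoord (\row_(i < n) F (i : nat)) k = F k.
Proof.
move=> kn; rewrite /vcoord; case: insubP => [i _ <-|]; first by rewrite mxE.
by rewrite kn.
Qed.

Section Circ.
Variable n : nat.
Hypothesis hn : (2 <= n)%N.

Definition hh : R := 2^-1.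
Definition AA : R := n%:R / 4 * (1 + hh).
Definition f0 (k : nat) : C :=
  if k == n.-1 then (hh%:C)%C else
  if (k == 0%N) || (k == n.-2) then (AA%:C)%C else 0.
Definition f1 (k : nat) : C :=
  if k == n.-1 then ((- hh)%:C)%C else
  if (k == 0%N) || (k == n.-2) then ((- AA)%:C)%C else 0.
Definition z0 : 'rV[C]_n := \row_(i < n) f0 i.
Definition z1 : 'rV[C]_n := \row_(i < n) f1 i.

Lemma z0G' : True. Proof. done. Qed.
Lemma z0G : Gtilde R n z0.
Proof.
split.
  rewrite vcoord_row; last by lia.
  rewrite /f0 eqxx normC_real ltcR /hh ger0_norm ?invr_ge0 ?ler0n //.
  by rewrite invf_lt1 ?ltr0n // ltr1n.
exists (fun j => if (j == 1%N) || (j == n.-1) then ((n%:R / 4)%:C)%C else 0).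
move=> j hj.
have e : ((n - j)%N == 1%N) || ((n - j)%N == n.-1) = ((j == 1%N) || (j == n.-1)).
  by apply/idP/idP => /orP[] /eqP ?; apply/orP; lia.
rewrite e /z0 !vcoord_row; try lia.
rewrite /f0 eqxx.
have -> : (j.-1 == n.-1) = false by apply/eqP; lia.
have -> : (j.-1 == 0%N) || (j.-1 == n.-2) = ((j == 1%N) || (j == n.-1)).
  by apply/idP/idP => /orP[] /eqP ?; apply/orP; lia.
have n0 : (0 : R) < n%:R by rewrite ltr0n; lia.
case: ifP => hb.
  split.
    rewrite normC_real -rmorphD -(rmorph_nat (real_complex R)) ltcR.
    have -> : 'C(n, j) = n.
      case/orP: hb => /eqP ->; first exact: bin1.
      by rewrite -subn1 bin_sub ?bin1 //; lia.
    rewrite ger0_norm; last by rewrite divr_ge0 // ltW.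
    lra.
  rewrite conj_real -rmorphM -rmorphD /AA /hh; congr (_%:C)%C; ring.
rewrite normr0 addr0; split.
  by rewrite ltr0n bin_gt0; lia.
by rewrite /conjC rmorph0 mul0r addr0.
Qed.


Definition FF (w : 'rV[C]_n) : C :=
  `|vcoord w 0 - conjC (vcoord w n.-2) * vcoord w n.-1| +
  `|vcoord w n.-2 - conjC (vcoord w 0) * vcoord w n.-1| +
  n%:R * `|vcoord w n.-1| ^+ 2.
Definition KK := [set w : 'rV[C]_n | complex.Re (FF w) <= n%:R].

Lemma G_K w : Gtilde R n w -> KK w.
Proof.
case=> hq [beta hb].
have [h1 e1] := hb 1%N ltac:(lia).
have [h2 e2] := hb n.-1 ltac:(lia).
have en2 : (n - n.-1)%N = 1%N by lia.
have en1 : (n - 1)%N = n.-1 by lia.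
rewrite en1 in h1 e1; rewrite en2 in e2.
rewrite /= in e1.
rewrite /KK /FF /= e1 e2.
set q := vcoord w n.-1.
set b1 := beta 1%N.
set bl := beta n.-1.
have ex1 : b1 + conjC bl * q - conjC (bl + conjC b1 * q) * q = b1 * (1 - `|q|^+2).
  by rewrite normCKC cjD cjM /conjC conjCK; ring.
have ex2 : bl + conjC b1 * q - conjC (b1 + conjC bl * q) * q = bl * (1 - `|q|^+2).
  by rewrite normCKC cjD cjM /conjC conjCK; ring.
rewrite ex1 ex2 !normrM.
have [B1 hB1] := realC_ex _ (normr_real b1).
have [BL hBL] := realC_ex _ (normr_real bl).
have [S hS] := realC_ex _ (normr_real q).
have B10 : 0 <= B1 by rewrite -ler0c -hB1.
have BL0 : 0 <= BL by rewrite -ler0c -hBL.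
have S0 : 0 <= S by rewrite -ler0c -hS.
have S1 : S < 1 by apply: ltC1; rewrite -hS.
rewrite bin1 hB1 hBL -rmorphD in h1.
have {}h1 : B1 + BL < n%:R by rewrite -ltcR rmorph_nat.
rewrite hB1 hBL hS.
have -> : (1 - ((S%:C)%C)^+2 : C) = ((1 - S^+2)%:C)%C by rewrite rmorphB rmorphXn rmorph1.
have -> : (n%:R : C) = (((n%:R : R))%:C)%C by rewrite rmorph_nat.
rewrite normC_real -!rmorphXn -!rmorphM -!rmorphD /=.
have hT : 0 <= 1 - S^+2 by rewrite subr_ge0 exprn_ile1 // ltW.
rewrite ger0_norm //.
have h := ler_wpM2r hT (ltW h1).
apply: (@le_trans _ _ (n%:R * (1 - S^+2) + n%:R * S^+2)).
  by rewrite -mulrDl lerD2r.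
by rewrite -mulrDr subrK mulr1.
Qed.


Lemma cont_cv k : continuous (fun w : 'rV[C]_n => conjC (vcoord w k)).
Proof. by move=> w; apply: (continuous_comp (cont_vcoord _ _ w) (cont_conj _)). Qed.

Lemma contD' (f g : 'rV[C]_n -> C) x :
  {for x, continuous f} -> {for x, continuous g} -> {for x, continuous (fun y => f y + g y)}.
Proof. exact: continuousD. Qed.
Lemma contB' (f g : 'rV[C]_n -> C) x :
  {for x, continuous f} -> {for x, continuous g} -> {for x, continuous (fun y => f y - g y)}.
Proof. exact: continuousB. Qed.
Lemma contM' (f g : 'rV[C]_n -> C) x :
  {for x, continuous f} -> {for x, continuous g} -> {for x, continuous (fun y => f y * g y)}.
Proof. exact: continuousM. Qed.

Lemma cont_nv (f : 'rV[C]_n -> C) : continuous f -> continuous (fun w => `|f w|).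
Proof. by move=> cf w; apply: (continuous_comp (cf w) (@norm_continuous _ C _)). Qed.

Lemma cont_FF : continuous FF.
Proof.
move=> w.
have h1 : {for w, continuous (fun y : 'rV[C]_n =>
   `|vcoord y 0 - conjC (vcoord y n.-2) * vcoord y n.-1| : C)}.
  apply: cont_nv => y. apply: contB'; first exact: cont_vcoord.
  by apply: contM'; [exact: cont_cv | exact: cont_vcoord].
have h2 : {for w, continuous (fun y : 'rV[C]_n =>
   `|vcoord y n.-2 - conjC (vcoord y 0) * vcoord y n.-1| : C)}.
  apply: cont_nv => y; apply: contB'; first exact: cont_vcoord.
  by apply: contM'; [exact: cont_cv | exact: cont_vcoord].
have h3 : {for w, continuous (fun y : 'rV[C]_n =>
   (n%:R : C) * (`|vcoord y n.-1| ^+ 2))}.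
  have -> : (fun y : 'rV[C]_n => (n%:R : C) * (`|vcoord y n.-1| ^+ 2)) =
            (fun y : 'rV[C]_n => (n%:R : C) * (`|vcoord y n.-1| * `|vcoord y n.-1|)).
    by apply: funext => y; rewrite expr2.
  apply: contM'; first exact: cst_continuous.
  by apply: contM'; apply: cont_nv; exact: cont_vcoord.
have h := contD' _ _ _ (contD' _ _ _ h1 h2) h3.
have eFF : FF = (fun y : 'rV[C]_n =>
   `|vcoord y 0 - conjC (vcoord y n.-2) * vcoord y n.-1| +
   `|vcoord y n.-2 - conjC (vcoord y 0) * vcoord y n.-1| +
   (n%:R : C) * (`|vcoord y n.-1| ^+ 2)) by [].
rewrite eFF; exact: h.
Qed.

Lemma KK_closed : closed KK.
Proof.
have -> : KK = (fun w => complex.Re (FF w)) @^-1` [set x | x <= n%:R] by [].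
apply: preimage_closed; last exact: closed_le.
move=> w _; exact: (continuous_comp (cont_FF w) (cont_Re _)).
Qed.

Lemma Gam_K w : Gammatilde R n w -> KK w.
Proof.
move=> hw; have : closure KK w by apply: (closureS _ hw); exact: G_K.
by rewrite -((closure_id _).1 KK_closed).
Qed.


Lemma z1_notK : ~ KK z1.
Proof.
rewrite /KK /FF /= /z1 !vcoord_row; try lia.
rewrite /f1 eqxx.
have -> : (0 == n.-1) = false by apply/eqP; lia.
have -> : (n.-2 == n.-1) = false by apply/eqP; lia.
rewrite !eqxx !orbT /=.
have -> : (n%:R : C) = (((n%:R : R))%:C)%C by rewrite rmorph_nat.
rewrite !conj_real -!rmorphM -!rmorphB !normC_real -!rmorphXn -!rmorphM -!rmorphD /=.
have e : - AA - - AA * - hh = - (AA * (1 + hh)) by ring.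
have hh0 : 0 <= hh by rewrite /hh invr_ge0 ler0n.
have AA0 : 0 <= AA by rewrite /AA mulr_ge0 // ?divr_ge0 ?ler0n // addr_ge0.
rewrite e normrN ger0_norm ?mulr_ge0 ?addr_ge0 // normrN ger0_norm //.
have n0 : (0 : R) < n%:R by rewrite ltr0n; lia.
rewrite /AA /hh; lra.
Qed.

Lemma rot_z0 : expi pi *: z0 = z1.
Proof.
have -> : expi pi = -1 :> C.
  by rewrite /expi cospi sinpi; apply/eqP; rewrite eq_complex /= oppr0 !eqxx.
apply/rowP => i; rewrite !mxE /f0 /f1.
case: ifP => _; first by rewrite rmorphN mulN1r.
case: ifP => _; first by rewrite rmorphN mulN1r.
by rewrite mulr0.
Qed.

Lemma G_not_circ : ~ circular (Gtilde R n).
Proof. move=> h; apply: z1_notK; apply: G_K; rewrite -rot_z0; exact: h _ z0G pi. Qed.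

Lemma Gam_not_circ : ~ circular (Gammatilde R n).
Proof.
move=> h; apply: z1_notK; apply: Gam_K; rewrite -rot_z0; apply: h.
exact: subset_closure z0G.
Qed.

End Circ.
End S.
Definition mx {R : realType} (a b : R) : R := Num.max a b.
Definition mn {R : realType} (a b : R) : R := Num.min a b.
Section R1.
Variable R : realType.
Variable T : topologicalType.

Lemma cR_D (f g : T -> R) x : {for x, continuous f} -> {for x, continuous g} ->
  {for x, continuous (fun y => f y + g y)}.
Proof. exact: continuousD. Qed.
Lemma cR_B (f g : T -> R) x : {for x, continuous f} -> {for x, continuous g} ->
  {for x, continuous (fun y => f y - g y)}.
Proof. exact: continuousB. Qed.
Lemma cR_M (f g : T -> R) x : {for x, continuous f} -> {for x, continuous g} ->
  {for x, continuous (fun y => f y * g y)}.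
Proof. exact: continuousM. Qed.
Lemma cR_max (f g : T -> R) x : {for x, continuous f} -> {for x, continuous g} ->
  {for x, continuous (fun y => mx (f y) (g y))}.
Proof. exact: continuous_max. Qed.
Lemma cR_min (f g : T -> R) x : {for x, continuous f} -> {for x, continuous g} ->
  {for x, continuous (fun y => mn (f y) (g y))}.
Proof. exact: continuous_min. Qed.
Lemma cR_cst (c : R) x : {for x, continuous (fun _ : T => c)}.
Proof. exact: cst_continuous. Qed.
End R1.

Section R2.
Variable R : realType.
Lemma c1_D (f g : R -> R) x : {for x, continuous f} -> {for x, continuous g} ->
  {for x, continuous (fun y => f y + g y)}.
Proof. exact: continuousD. Qed.
Lemma c1_B (f g : R -> R) x : {for x, continuous f} -> {for x, continuous g} ->
  {for x, continuous (fun y => f y - g y)}.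
Proof. exact: continuousB. Qed.
Lemma c1_M (f g : R -> R) x : {for x, continuous f} -> {for x, continuous g} ->
  {for x, continuous (fun y => f y * g y)}.
Proof. exact: continuousM. Qed.
Lemma c1_max (f g : R -> R) x : {for x, continuous f} -> {for x, continuous g} ->
  {for x, continuous (fun y => mx (f y) (g y))}.
Proof. exact: continuous_max. Qed.
Lemma c1_min (f g : R -> R) x : {for x, continuous f} -> {for x, continuous g} ->
  {for x, continuous (fun y => mn (f y) (g y))}.
Proof. exact: continuous_min. Qed.
Lemma c1_cst (c : R) x : {for x, continuous (fun _ : R => c)}.
Proof. exact: cst_continuous. Qed.

Lemma c_fst (p : R * R) : {for p, continuous (fun q : R * R => q.1)}.
Proof. exact: cvg_fst. Qed.
Lemma c_snd (p : R * R) : {for p, continuous (fun q : R * R => q.2)}.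
Proof. exact: cvg_snd. Qed.
Lemma c_id (x : R) : {for x, continuous (fun y : R => y)}.
Proof. exact: cvg_id. Qed.

Definition dd (s : R) : R := mn s (1 - s).
Definition m1 (t : R) : R := mn 1 (2 - 2 * t).
Definition m2 (t : R) : R := mn t (2^-1).
Definition lam (s t : R) : R := mx 0 (m1 t - 16 * dd s * m2 t).
Definition mu (t : R) : R := mx 0 (2 * t - 1).
Definition raw (s t : R) : R := 2^-1 + (s - 2^-1) * (1 + t).
Definition cl (x : R) : R := mx 0 (mn 1 x).

Lemma cont_lam : continuous (fun p : R * R => lam p.1 p.2).
Proof.
move=> p; rewrite /lam /m1 /m2 /dd.
apply: (cR_max R (R * R)%type); first exact: (cR_cst R (R * R)%type).
apply: (cR_B R (R * R)%type); first by apply: (cR_min R (R * R)%type); [exact: (cR_cst R (R * R)%type)| apply: (cR_B R (R * R)%type); [exact: (cR_cst R (R * R)%type)|apply: (cR_M R (R * R)%type); [exact: (cR_cst R (R * R)%type)|exact: c_snd]]].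
apply: (cR_M R (R * R)%type); last by apply: (cR_min R (R * R)%type); [exact: c_snd | exact: (cR_cst R (R * R)%type)].
apply: (cR_M R (R * R)%type); first exact: (cR_cst R (R * R)%type).
by apply: (cR_min R (R * R)%type); [exact: c_fst| apply: (cR_B R (R * R)%type); [exact: (cR_cst R (R * R)%type)|exact: c_fst]].
Qed.

Lemma cont_mu : continuous (fun t : R => mu t).
Proof.
move=> x; rewrite /mu; refine (c1_max (fun=> 0) (fun t => 2*t - 1) x _ _); first exact: c1_cst.
by apply: c1_B; [apply: c1_M; [exact: c1_cst|exact: c_id]|exact: c1_cst].
Qed.

Lemma cont_raw : continuous (fun p : R * R => raw p.1 p.2).
Proof.
move=> p; rewrite /raw; apply: (cR_D R (R * R)%type); first exact: (cR_cst R (R * R)%type).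
apply: (cR_M R (R * R)%type); first by apply: (cR_B R (R * R)%type); [exact: c_fst|exact: (cR_cst R (R * R)%type)].
by apply: (cR_D R (R * R)%type); [exact: (cR_cst R (R * R)%type)|exact: c_snd].
Qed.

Lemma cont_cl : continuous (fun t : R => cl t).
Proof.
move=> x; rewrite /cl; apply: c1_max; first exact: c1_cst.
by apply: c1_min; [exact: c1_cst|exact: c_id].
Qed.

Lemma mxP (a b : R) : (b <= a /\ mx a b = a) \/ (a <= b /\ mx a b = b).
Proof.
rewrite /mx; case: (lerP a b) => h; first by right.
by left; split => //; exact: ltW.
Qed.
Lemma mnP (a b : R) : (a <= b /\ mn a b = a) \/ (b <= a /\ mn a b = b).
Proof.
rewrite /mn; case: (lerP a b) => h; first by left.
by right; split => //; exact: ltW.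
Qed.

Ltac noinner x := lazymatch x with
  | context [mx _ _] => fail
  | context [mn _ _] => fail
  | _ => idtac end.
Ltac split_mm := repeat match goal with
  | |- context [mx ?a ?b] => noinner a; noinner b; let h := fresh "h" in case: (mxP a b) => [[h ->]|[h ->]]
  | |- context [mn ?a ?b] => noinner a; noinner b; let h := fresh "h" in case: (mnP a b) => [[h ->]|[h ->]]
  end.

Section facts.
Variables (s t : R).

Lemma lam_t0 : 0 <= s -> s <= 1 -> 0 <= t -> t <= 1 -> lam s 0 = 1.
Proof. move=> s0 s1 t0 t1; rewrite /lam /m1 /m2 /dd; split_mm; lra. Qed.
Lemma mu_0 : 0 <= s -> s <= 1 -> 0 <= t -> t <= 1 -> mu 0 = 0.
Proof. move=> s0 s1 t0 t1; rewrite /mu; split_mm; lra. Qed.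
Lemma cl_raw_t0 : 0 <= s -> s <= 1 -> 0 <= t -> t <= 1 -> cl (raw s 0) = s.
Proof. move=> s0 s1 t0 t1; rewrite /cl /raw; split_mm; lra. Qed.
Lemma lam_t1 : 0 <= s -> s <= 1 -> 0 <= t -> t <= 1 -> lam s 1 = 0.
Proof. move=> s0 s1 t0 t1; rewrite /lam /m1 /m2 /dd; split_mm; lra. Qed.
Lemma mu_1 : 0 <= s -> s <= 1 -> 0 <= t -> t <= 1 -> mu 1 = 1.
Proof. move=> s0 s1 t0 t1; rewrite /mu; split_mm; lra. Qed.
Lemma lam_mu_s0 : 0 <= s -> s <= 1 -> 0 <= t -> t <= 1 -> lam 0 t + mu t = 1.
Proof. move=> s0 s1 t0 t1; rewrite /lam /m1 /m2 /dd /mu; split_mm; lra. Qed.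
Lemma lam_mu_s1 : 0 <= s -> s <= 1 -> 0 <= t -> t <= 1 -> lam 1 t + mu t = 1.
Proof. move=> s0 s1 t0 t1; rewrite /lam /m1 /m2 /dd /mu; split_mm; lra. Qed.
Lemma cl_raw_s0 : 0 <= s -> s <= 1 -> 0 <= t -> t <= 1 -> cl (raw 0 t) = 0.
Proof. move=> s0 s1 t0 t1; rewrite /cl /raw; split_mm; lra. Qed.
Lemma cl_raw_s1 : 0 <= s -> s <= 1 -> 0 <= t -> t <= 1 -> cl (raw 1 t) = 1.
Proof. move=> s0 s1 t0 t1; rewrite /cl /raw; split_mm; lra. Qed.
Lemma mu_01 : 0 <= s -> s <= 1 -> 0 <= t -> t <= 1 -> 0 <= mu t <= 1.
Proof. move=> s0 s1 t0 t1; rewrite /mu; split_mm; lra. Qed.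
Lemma cl_01 x : 0 <= s -> s <= 1 -> 0 <= t -> t <= 1 -> 0 <= cl x <= 1.
Proof. move=> s0 s1 t0 t1; rewrite /cl; split_mm; lra. Qed.
Lemma lam_01 : 0 <= s -> s <= 1 -> 0 <= t -> t <= 1 -> 0 <= lam s t <= 1.
Proof.
move=> s0 s1 t0 t1; rewrite /lam /m1 /m2 /dd; split_mm; try lra.
all: nra.
Qed.
Lemma key_lm : 0 <= s -> s <= 1 -> 0 <= t -> t <= 1 -> 0 < mu t -> 0 < lam s t ->
  (cl (raw s t) = 0 \/ cl (raw s t) = 1) /\ lam s t + mu t <= 1.
Proof.
move=> s0 s1 t0 t1; rewrite /lam /m1 /m2 /dd /mu /cl /raw; split_mm; try lra.
all: try (split; [|lra]).
all: try (left; lra).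
all: try (right; lra).
all: nra.
Qed.
End facts.
Lemma mu_small (t : R) : t <= 2^-1 -> mu t = 0.
Proof. rewrite /mu => h; split_mm; lra. Qed.
Lemma mu_big (t : R) : 2^-1 <= t -> mu (1 - t) = 0.
Proof. rewrite /mu => h; split_mm; lra. Qed.
End R2.
Arguments dd {R}. Arguments m1 {R}. Arguments m2 {R}. Arguments lam {R}.
Arguments mu {R}. Arguments raw {R}. Arguments cl {R}.

Section SC.
Variable R : realType.
Local Notation C := ((R[i])^o).

Lemma within_comp (A : set R) (U : topologicalType) (g : R -> U) (c : R -> R) :
  {within A, continuous g} -> continuous c -> (forall x, A (c x)) ->
  continuous (fun x => g (c x)).
Proof.
move=> /subspace_continuousP gc cc cA x.
have h : c @ x --> within A (nbhs (c x)).
  move=> P /= hP.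
  have h2 : nbhs x [set z | A (c z) -> P (c z)] := cc x _ hP.
  change (nbhs x [set z | P (c z)]).
  by apply: filterS h2 => z; apply; exact: cA.
exact: (cvg_comp _ _ h (gc _ (cA x))).
Qed.

Lemma in01 (s : R) : s \in `[0, 1] -> 0 <= s <= 1.
Proof. by rewrite in_itv. Qed.
Lemma in01' (s : R) : 0 <= s <= 1 -> s \in `[0, 1].
Proof. by rewrite in_itv. Qed.
Lemma in01p (p : R * R) : p \in `[0, 1] `*` `[0, 1] -> 0 <= p.1 <= 1 /\ 0 <= p.2 <= 1.
Proof. by rewrite in_setE /= !in_itv. Qed.

Lemma cVR_D n (f g : R -> 'rV[C]_n) x : {for x, continuous f} -> {for x, continuous g} ->
  {for x, continuous (fun y => f y + g y)}.
Proof. exact: continuousD. Qed.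
Lemma cVR_Z n (a : R -> R) (f : R -> 'rV[C]_n) x : {for x, continuous a} ->
  {for x, continuous f} -> {for x, continuous (fun y => (((a y)%:C%C : C) *: f y : 'rV[C]_n))}.
Proof.
move=> ha hf; apply: continuousZ => //.
exact: (continuous_comp ha (cont_RC R (a x))).
Qed.
Lemma cVP_D n (f g : R * R -> 'rV[C]_n) x : {for x, continuous f} -> {for x, continuous g} ->
  {for x, continuous (fun y => f y + g y)}.
Proof. exact: continuousD. Qed.
Lemma cVP_Z n (a : R * R -> R) (f : R * R -> 'rV[C]_n) x : {for x, continuous a} ->
  {for x, continuous f} -> {for x, continuous (fun y => (((a y)%:C%C : C) *: f y : 'rV[C]_n))}.
Proof.
move=> ha hf; apply: continuousZ => //.
exact: (continuous_comp ha (cont_RC R (a x))).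
Qed.


Lemma RC0 : ((0 : R)%:C)%C = 0 :> C. Proof. by []. Qed.
Lemma RC1 : ((1 : R)%:C)%C = 1 :> C. Proof. by []. Qed.

Lemma RCD (a b : R) : ((a%:C)%C : C) + (b%:C)%C = ((a + b)%:C)%C.
Proof. by rewrite rmorphD. Qed.

Lemma within_of_cont n (f : R -> 'rV[C]_n) : (forall x, {for x, continuous f}) ->
  {within `[0, 1], continuous f}.
Proof. by move=> h; apply: continuous_subspaceT => x; exact: h. Qed.

Lemma path_ex n (x y : 'rV[C]_n) : Gtilde R n x -> Gtilde R n y ->
  exists f : R -> 'rV[C]_n,
     {within `[0, 1], continuous f} /\ f 0 = x /\ f 1 = y /\
     (forall s, s \in `[0, 1] -> Gtilde R n (f s)).
Proof.
move=> hx hy.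
have m0 : mu (0:R) = 0 := mu_0 _ 0 0 (lexx 0) ler01 (lexx 0) ler01.
have m1 : mu (1:R) = 1 := mu_1 _ 0 0 (lexx 0) ler01 (lexx 0) ler01.
exists (fun s => ((mu (1 - s))%:C%C : C) *: x + ((mu s)%:C%C : C) *: y).
split.
  apply: within_of_cont => s.
  refine (cVR_D _ (fun s => ((mu (1 - s))%:C%C : C) *: x) (fun s => ((mu s)%:C%C : C) *: y) s _ _).
    refine (cVR_Z _ (fun s => mu (1 - s)) (fun=> x) s _ _); last exact: cst_continuous.
    apply: (continuous_comp (f := fun s : R => 1 - s) (g := fun t => mu t)); last exact: (cont_mu R _).
    exact: (c1_B _ (fun=> 1) (fun s => s) s (c1_cst _ _ _) (c_id _ _)).
  refine (cVR_Z _ (fun s => mu s) (fun=> y) s _ _); last exact: cst_continuous.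
  exact: (cont_mu R _).
split; first by rewrite subr0 m1 m0 RC0 RC1 scale1r scale0r addr0.
split; first by rewrite subrr m1 m0 RC0 RC1 scale1r scale0r add0r.
move=> s /in01 /andP[s0 s1].
have [hs|hs] := lerP s 2^-1.
  rewrite [mu s]mu_small // RC0 scale0r addr0; apply: G_scale => //.
  apply: (mu_01 _ 0 (1 - s)); lra.
rewrite mu_big ?RC0 ?scale0r ?add0r; last exact: ltW.
by apply: G_scale => //; apply: (mu_01 _ 0 s); lra.
Qed.


Lemma cl_raw1 (u t : R) : u = 1 -> 0 <= t -> t <= 1 -> cl (raw u t) = 1.
Proof. by move=> -> t0 t1; exact: (cl_raw_s1 _ 0 t (lexx 0) ler01 t0 t1). Qed.
Lemma lam_mu1 (u t : R) : u = 1 -> 0 <= t -> t <= 1 -> lam u t + mu t = 1.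
Proof. by move=> -> t0 t1; exact: (lam_mu_s1 _ 0 t (lexx 0) ler01 t0 t1). Qed.

Lemma within_of_cont2 n (f : R * R -> 'rV[C]_n) : (forall p, {for p, continuous f}) ->
  {within `[0, 1] `*` `[0, 1], continuous f}.
Proof. by move=> h; apply: continuous_subspaceT => x; exact: h. Qed.

Lemma G_sc n : simply_connected (Gtilde R n).
Proof.
split; first by exists 0; exact: G0.
split; first exact: path_ex.
move=> g gc g01 gS.
have c01 : forall x : R, 0 <= cl x <= 1.
  by move=> x; exact: (cl_01 _ 0 0 x (lexx 0) ler01 (lexx 0) ler01).
have gcc := within_comp _ _ _ _ gc (cont_cl R) (fun x => in01' _ (c01 x)).
pose H := fun p : R * R => ((lam p.1 p.2)%:C%C : C) *: g (cl (raw p.1 p.2)) +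
                           ((mu p.2)%:C%C : C) *: g 0.
exists H.
split.
  apply: within_of_cont2 => p.
  refine (cVP_D _ (fun p => ((lam p.1 p.2)%:C%C : C) *: g (cl (raw p.1 p.2)))
                  (fun p => ((mu p.2)%:C%C : C) *: g 0) p _ _).
    refine (cVP_Z _ (fun p => lam p.1 p.2) (fun p => g (cl (raw p.1 p.2))) p _ _).
      exact: (cont_lam R p).
    exact: (continuous_comp (cont_raw R p) (gcc _)).
  refine (cVP_Z _ (fun p => mu p.2) (fun=> g 0) p _ _); last exact: cst_continuous.
  exact: (continuous_comp (c_snd R p) (cont_mu R _)).
split.
  move=> s /in01 /andP[s0 s1]; rewrite /H /=; split.
    rewrite (lam_t0 _ s 0 s0 s1 (lexx 0) ler01) (mu_0 _ s 0 s0 s1 (lexx 0) ler01).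
    by rewrite (cl_raw_t0 _ s 0 s0 s1 (lexx 0) ler01) RC1 RC0 scale1r scale0r addr0.
  rewrite (lam_t1 _ s 0 s0 s1 (lexx 0) ler01) (mu_1 _ s 0 s0 s1 (lexx 0) ler01).
  by rewrite RC1 RC0 scale1r scale0r add0r.
split.
  move=> t /in01 /andP[t0 t1]; rewrite /H /=; split.
    rewrite (cl_raw_s0 _ 0 t (lexx 0) ler01 t0 t1) -scalerDl RCD.
    by rewrite (lam_mu_s0 _ 0 t (lexx 0) ler01 t0 t1) RC1 scale1r.
  rewrite (@cl_raw1 _ t) // -g01 -scalerDl RCD.
  by rewrite (@lam_mu1 _ t) // RC1 scale1r.
move=> p /in01p [/andP[s0 s1] /andP[t0 t1]]; rewrite /H.
have [m0 m1] := andP (mu_01 _ p.1 p.2 s0 s1 t0 t1).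
have [l0 l1] := andP (lam_01 _ p.1 p.2 s0 s1 t0 t1).
have g0S : Gtilde R n (g 0) by apply: gS; apply: in01'; rewrite lexx ler01.
case: (eqVneq (mu p.2) 0) => hm.
  rewrite hm RC0 scale0r addr0; apply: G_scale; last by rewrite l0 l1.
  by apply: gS; apply: in01'.
case: (eqVneq (lam p.1 p.2) 0) => hl.
  by rewrite hl RC0 scale0r add0r; apply: G_scale; last by rewrite m0 m1.
have mp : 0 < mu p.2 by rewrite lt_neqAle eq_sym hm.
have lp : 0 < lam p.1 p.2 by rewrite lt_neqAle eq_sym hl.
have [hc hsum] := key_lm _ p.1 p.2 s0 s1 t0 t1 mp lp.
have -> : g (cl (raw p.1 p.2)) = g 0 by case: hc => ->; last rewrite -g01.
rewrite -scalerDl RCD; apply: G_scale => //.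
by rewrite hsum addr_ge0.
Qed.

End SC.

Theorem mainTheorem6 (R : realType) (n : nat) (hn : (2 <= n)%N) :
  starlike (Gtilde R n) 0 /\ starlike (Gammatilde R n) 0 /\
  ~ circular (Gtilde R n) /\ ~ circular (Gammatilde R n) /\
  simply_connected (Gtilde R n).
Proof.
split; first exact: G_star.
split; first exact: Gam_star.
split; first exact: (@G_not_circ R n hn).
split; first exact: (@Gam_not_circ R n hn).
exact: G_sc.
Qed.
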